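(* Let $\Sigma_n$ be an empty signature with sorts $S=\{\sigma_1,\dots,\sigma_n\}$, let $\Sigma^n_s$ be the signature with sorts $S$ and a single function symbol $s$ of arity $\sigma_1\to\sigma_1$, let $\mathcal{T}$ be a $\Sigma_n$-theory, and let $\mathcal{T}'$ be the $\Sigma^n_s$-theory axiomatized by $Ax(\mathcal{T})\cup\{\psi_\vee\}$, where $\psi_\vee=\forall x.\,[(s(s(x))=x)\vee(s(s(x))=s(x))]$ with $x$ of sort $\sigma_1$. Then $\mathcal{T}$ has the finite model property with respect to $S$ iff $\mathcal{T}'$ has the finite model property with respect to $S$; and $\mathcal{T}$ is stably finite with respect to $S$ iff $\mathcal{T}'$ is stably finite with respect to $S$.
   Context: An empty signature has no function symbols and only equality predicates (interpreted as identity). A $\Sigma$-interpretation is a structure (nonempty domain $\tau^{\mathcal{A}}$ per sort $\tau$) plus values for variables; a $\Sigma$-theory $\mathcal{T}$ is the class of all $\Sigma$-interpretations satisfying a set $Ax(\mathcal{T})$ of closed formulas (its $\mathcal{T}$-interpretations); $\mathcal{T}$-satisfiable means satisfied by some $\mathcal{T}$-interpretation. Finite model property w.r.t. $S$: every $\mathcal{T}$-satisfiable quantifier-free formula is satisfied by a $\mathcal{T}$-interpretation $\mathcal{A}$ with $\tau^{\mathcal{A}}$ finite for each $\tau\in S$. Stably finite w.r.t. $S$: for every quantifier-free $\phi$ and $\mathcal{T}$-interpretation $\mathcal{A}$ satisfying $\phi$, some $\mathcal{T}$-interpretation $\mathcal{B}$ satisfies $\phi$ with $|\tau^{\mathcal{B}}|$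 finite and $|\tau^{\mathcal{B}}|\le|\tau^{\mathcal{A}}|$ for each $\tau\in S$. *)

(* Defs.v *)
(* Many-sorted first-order logic with equality,
   sorts 'I_n.+1 (sigma_1 = ord0), and optionally one unary function symbol
   s : sigma_1 -> sigma_1 (present iff the signature flag b is true). *)
From Stdlib Require List.
From mathcomp Require Import all_boot.
Set Implicit Arguments. Unset Strict Implicit. Unset Printing Implicit Defensive.

Section Syntax.
Variables (n : nat) (b : bool).

Inductive term : 'I_n.+1 -> Type :=
| Tvar (σ : 'I_n.+1) (k : nat) : term σ
| Ts : b -> term ord0 -> term ord0.

Inductive formula : Type :=
| Feq (σ : 'I_n.+1) (t u : term σ)
| Ftrue | Ffalse
| Fnot (φ : formula)
| Fand (φ ψ : formula) | For (φ ψ : formula) | Fimp (φ ψ : formula)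
| Fall (σ : 'I_n.+1) (k : nat) (φ : formula)
| Fex (σ : 'I_n.+1) (k : nat) (φ : formula).

Fixpoint tfree (σ : 'I_n.+1) (k : nat) (τ : 'I_n.+1) (t : term τ) : bool :=
  match t with
  | Tvar τ j => (τ == σ) && (j == k)
  | Ts _ t' => tfree σ k t'
  end.

Fixpoint free (σ : 'I_n.+1) (k : nat) (φ : formula) : bool :=
  match φ with
  | Feq _ t u => tfree σ k t || tfree σ k u
  | Ftrue | Ffalse => false
  | Fnot φ => free σ k φ
  | Fand φ ψ | For φ ψ | Fimp φ ψ => free σ k φ || free σ k ψ
  | Fall τ j φ | Fex τ j φ => ~~ ((τ == σ) && (j == k)) && free σ k φ
  end.

Definition closed_form (φ : formula) : Prop := forall σ k, ~~ free σ k φ.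

Fixpoint qfree (φ : formula) : bool :=
  match φ with
  | Feq _ _ _ | Ftrue | Ffalse => true
  | Fnot φ => qfree φ
  | Fand φ ψ | For φ ψ | Fimp φ ψ => qfree φ && qfree ψ
  | Fall _ _ _ | Fex _ _ _ => false
  end.

(* Interpretations: a nonempty domain per sort, an interpretation of s
   (a function indexed by a proof of b, so it carries no data when b = false,
   i.e. for the empty signature), and values for the variables. *)
Record interp := Interp {
  dom : 'I_n.+1 -> Type;
  dom_ne : forall σ, inhabited (dom σ);
  sI : b -> dom ord0 -> dom ord0;
  val : forall σ, nat -> dom σ }.

Section Eval.
Variables (D : 'I_n.+1 -> Type) (s : b -> D ord0 -> D ord0).

Fixpoint teval (v : forall σ, nat -> D σ) (τ : 'I_n.+1) (t : term τ) : D τ :=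
  match t in term τ return D τ with
  | Tvar τ k => v τ k
  | Ts hb t' => s hb (teval v t')
  end.

Definition upd (v : forall σ, nat -> D σ) (σ : 'I_n.+1) (k : nat) (d : D σ)
  : forall τ, nat -> D τ :=
  fun τ j =>
    match @eqP _ σ τ with
    | ReflectT e => if j == k then eq_rect σ D d τ e else v τ j
    | ReflectF _ => v τ j
    end.

Fixpoint holds (v : forall σ, nat -> D σ) (φ : formula) : Prop :=
  match φ with
  | Feq _ t u => teval v t = teval v u
  | Ftrue => True
  | Ffalse => False
  | Fnot φ => ~ holds v φ
  | Fand φ ψ => holds v φ /\ holds v ψ
  | For φ ψ => holds v φ \/ holds v ψ
  | Fimp φ ψ => holds v φ -> holds v ψ
  | Fall σ k φ => forall d : D σ, holds (upd v k d) φ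
  | Fex σ k φ => exists d : D σ, holds (upd v k d) φ
  end.
End Eval.

Definition sat (A : interp) (φ : formula) : Prop := holds (@sI A) (@val A) φ.

Definition model (Ax : formula -> Prop) (A : interp) : Prop :=
  forall φ, Ax φ -> sat A φ.

Definition finite_type (T : Type) : Prop := exists l : list T, forall x, List.In x l.

Definition card_le (X Y : Type) : Prop := exists f : X -> Y, injective f.

Definition FMP (Ax : formula -> Prop) : Prop :=
  forall φ, qfree φ ->
    (exists A, model Ax A /\ sat A φ) ->
    exists B, model Ax B /\ sat B φ /\ forall σ, finite_type (dom B σ).

Definition stably_finite (Ax : formula -> Prop) : Prop :=
  forall φ, qfree φ -> forall A, model Ax A -> sat A φ ->
    exists B, model Ax B /\ sat B φ /\
      forall σ, finite_type (dom B σ) /\ card_le (dom B σ) (dom A σ).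

End Syntax.

Arguments term : clear implicits.
Arguments Tvar {n b}.
Arguments Ts {n b}.

Fixpoint tlift (n : nat) (τ : 'I_n.+1) (t : term n false τ) : term n true τ :=
  match t in term _ _ τ return term n true τ with
  | Tvar τ k => Tvar τ k
  | Ts _ t' => Ts isT (tlift t')
  end.

Fixpoint flift (n : nat) (φ : formula n false) : formula n true :=
  match φ with
  | Feq _ t u => Feq (tlift t) (tlift u)
  | Ftrue => Ftrue _ _
  | Ffalse => Ffalse _ _
  | Fnot φ => Fnot (flift φ)
  | Fand φ ψ => Fand (flift φ) (flift ψ)
  | For φ ψ => For (flift φ) (flift ψ)
  | Fimp φ ψ => Fimp (flift φ) (flift ψ)
  | Fall σ k φ => Fall σ k (flift φ)
  | Fex σ k φ => Fex σ k (flift φ)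
  end.

Definition psi_or (n : nat) : formula n true :=
  let x : term n true ord0 := Tvar ord0 0 in
  let sx := Ts isT x in
  let ssx := Ts isT sx in
  Fall ord0 0 (For (Feq ssx x) (Feq ssx sx)).

Definition ext_axioms (n : nat) (Ax : formula n false -> Prop) : formula n true -> Prop :=
  fun φ => (exists ψ, Ax ψ /\ φ = flift ψ) \/ φ = psi_or n.

(* Main.v *)
Require Import Defs.
From mathcomp Require Import all_boot.
From Stdlib Require Import ClassicalEpsilon.
Set Implicit Arguments. Unset Strict Implicit. Unset Printing Implicit Defensive.

Lemma upd_same n (D : 'I_n.+1 -> Type) (v : forall σ, nat -> D σ) σ k (d : D σ) :
  upd v k d σ k = d.
Proof.
rewrite /upd; case: eqP => [e|//]; rewrite eqxx.
by rewrite (eq_irrelevance e erefl).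
Qed.

Lemma teval_agree n b (D : 'I_n.+1 -> Type) s (v w : forall σ, nat -> D σ) τ (t : term n b τ) :
  (forall σ k, tfree σ k t -> v σ k = w σ k) -> teval s v t = teval s w t.
Proof.
elim: t => [σ k|h t IH] /= H.
  by apply: H; rewrite /= !eqxx.
by rewrite IH.
Qed.

Lemma holds_agree n b (D : 'I_n.+1 -> Type) s (φ : formula n b) :
  forall (v w : forall σ, nat -> D σ),
  (forall σ k, free σ k φ -> v σ k = w σ k) -> (holds s v φ <-> holds s w φ).
Proof.
elim: φ => [σ t u|||φ IH|φ IH ψ IH'|φ IH ψ IH'|φ IH ψ IH'|τ j φ IH|τ j φ IH] v w H /=.
- rewrite (@teval_agree _ _ _ s v w _ t) ?(@teval_agree _ _ _ s v w _ u) //.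
  + by move=> σ' k Hk; apply: H; rewrite /= Hk orbT.
  + by move=> σ' k Hk; apply: H; rewrite /= Hk.
- by [].
- by [].
- by rewrite (IH v w).
- by rewrite (IH v w) ?(IH' v w) // => σ k Hk; apply: H; rewrite /= Hk ?orbT.
- by rewrite (IH v w) ?(IH' v w) // => σ k Hk; apply: H; rewrite /= Hk ?orbT.
- by rewrite (IH v w) ?(IH' v w) // => σ k Hk; apply: H; rewrite /= Hk ?orbT.
- have E : forall d : D τ, holds s (upd v j d) φ <-> holds s (upd w j d) φ.
    move=> d; have := IH (upd v j d) (upd w j d); apply => σ k Hk.
    idtac.
    rewrite /upd; case: eqP => [e|ne]; last first.
      by apply: H; rewrite /= Hk andbT; apply/negP => /andP [/eqP E _]; apply: ne.
    case: ifP => // ne2; apply: H; rewrite /= Hk andbT.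
    by apply/negP => /andP [_ /eqP E]; move: ne2; rewrite E eqxx.
  by split => Hd d; apply/E/Hd.
- have E : forall d : D τ, holds s (upd v j d) φ <-> holds s (upd w j d) φ.
    move=> d; apply: (IH (upd v j d) (upd w j d)) => σ k Hk.
    rewrite /upd; case: eqP => [e|ne]; last first.
      by apply: H; rewrite /= Hk andbT; apply/negP => /andP [/eqP E _]; apply: ne.
    case: ifP => // ne2; apply: H; rewrite /= Hk andbT.
    by apply/negP => /andP [_ /eqP E]; move: ne2; rewrite E eqxx.
  by split => -[d Hd]; exists d; apply/E.
Qed.

Lemma closed_holds n b (D : 'I_n.+1 -> Type) s (φ : formula n b) v w :
  closed_form φ -> (holds (D:=D) s v φ <-> holds s w φ).
Proof. by move=> C; apply: holds_agree => σ k Hk; have := C σ k; rewrite Hk. Qed.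

Lemma teval_lift n (D : 'I_n.+1 -> Type) (s1 : true -> D ord0 -> D ord0)
   (s2 : false -> D ord0 -> D ord0) v τ (t : term n false τ) :
  teval s1 v (tlift t) = teval s2 v t.
Proof. by elim: t => [//|h]. Qed.

Lemma holds_lift n (D : 'I_n.+1 -> Type) (s1 : true -> D ord0 -> D ord0)
   (s2 : false -> D ord0 -> D ord0) (φ : formula n false) :
  forall v, holds s1 v (flift φ) <-> holds s2 v φ.
Proof.
elim: φ => [σ t u|||φ IH|φ IH ψ IH'|φ IH ψ IH'|φ IH ψ IH'|τ j φ IH|τ j φ IH] v /=;
  rewrite ?(teval_lift s1 s2) ?IH ?IH' //.
- by split => H d; apply/IH/H.
- by split => -[d Hd]; exists d; apply/IH.
Qed.

Lemma qfree_lift n (φ : formula n false) : qfree (flift φ) = qfree φ.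
Proof. by elim: φ => //= φ -> ψ ->. Qed.

Lemma psi_sem n (D : 'I_n.+1 -> Type) (s : true -> D ord0 -> D ord0) v :
  holds s v (psi_or n) <-> forall d, s isT (s isT d) = d \/ s isT (s isT d) = s isT d.
Proof. by rewrite /psi_or /=; split => H d; have := H d; rewrite upd_same. Qed.

Definition code (p : nat * nat) : nat := pickle p.
Definition uncode (j : nat) : nat * nat := odflt (0, 0) (unpickle j).
Lemma codeK : cancel code uncode.
Proof. by move=> p; rewrite /uncode /code pickleK. Qed.

Fixpoint nf n σ (t : term n true σ) : nat * nat :=
  match t with Tvar _ k => (k, 0) | Ts _ t' => ((nf t').1, (nf t').2.+1) end.
Fixpoint tnfs n σ (t : term n true σ) : seq (nat * nat) :=
  nf t :: match t with Tvar _ _ => [::] | Ts _ t' => tnfs t' end.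
Definition tr n σ (t : term n true σ) : term n false σ := Tvar σ (code (nf t)).
Fixpoint trf n (φ : formula n true) : formula n false :=
  match φ with
  | Feq _ t u => Feq (tr t) (tr u)
  | Ffalse => Ffalse _ _
  | Fnot φ => Fnot (trf φ)
  | Fand φ ψ => Fand (trf φ) (trf ψ)
  | For φ ψ => For (trf φ) (trf ψ)
  | Fimp φ ψ => Fimp (trf φ) (trf ψ)
  | _ => Ftrue _ _
  end.
Fixpoint fnfs n (φ : formula n true) : seq (nat * nat) :=
  match φ with
  | Feq _ t u => tnfs t ++ tnfs u
  | Fnot φ => fnfs φ
  | Fand φ ψ | For φ ψ | Fimp φ ψ => fnfs φ ++ fnfs ψ
  | _ => [::]
  end.

Lemma qfree_trf n (φ : formula n true) : qfree (trf φ).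
Proof. by elim: φ => //= φ -> ψ ->. Qed.

Lemma holds_tr n (D : 'I_n.+1 -> Type) (s1 : true -> D ord0 -> D ord0) v1
  (s2 : false -> D ord0 -> D ord0) v2 (N : seq (nat * nat)) :
  (forall σ (t : term n true σ), {subset tnfs t <= N} ->
      teval s1 v1 t = teval s2 v2 (tr t)) ->
  forall φ, qfree φ -> {subset fnfs φ <= N} ->
  (holds s1 v1 φ <-> holds s2 v2 (trf φ)).
Proof.
move=> Ht; elim => [σ t u|||φ IH|φ IH ψ IH'|φ IH ψ IH'|φ IH ψ IH'|τ j φ IH|τ j φ IH] //=.
- move=> _ sub; rewrite !Ht // => x Hx; apply: sub; rewrite mem_cat Hx ?orbT //.
- by move=> q sub; rewrite IH.
- move=> /andP [q1 q2] sub; rewrite IH ?IH' // => x Hx; apply: sub; rewrite mem_cat Hx ?orbT //.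
- move=> /andP [q1 q2] sub; rewrite IH ?IH' // => x Hx; apply: sub; rewrite mem_cat Hx ?orbT //.
- move=> /andP [q1 q2] sub; rewrite IH ?IH' // => x Hx; apply: sub; rewrite mem_cat Hx ?orbT //.
Qed.

Definition sS n (D : 'I_n.+1 -> Type) (f : D ord0 -> D ord0) (σ : 'I_n.+1) : D σ -> D σ :=
  match @eqP _ ord0 σ with
  | ReflectT e => fun x => eq_rect ord0 D (f (eq_rect σ D x ord0 (esym e))) σ e
  | ReflectF _ => id
  end.
Arguments sS [n D] f σ _.

Lemma sS0 n (D : 'I_n.+1 -> Type) (f : D ord0 -> D ord0) x : sS f ord0 x = f x.
Proof.
rewrite /sS; case: eqP => [e|//]; by rewrite (eq_irrelevance e erefl).
Qed.

Lemma teval_nf n (D : 'I_n.+1 -> Type) (s : true -> D ord0 -> D ord0) v σ (t : term n true σ) :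
  teval s v t = iter (nf t).2 (sS (s isT) σ) (v σ (nf t).1).
Proof.
elim: t => [//|h t IH] /=.
by rewrite sS0 -IH (eq_irrelevance h isT).
Qed.

Definition lit n (dec : nat * nat -> nat * nat -> bool) p q : formula n false :=
  let e := Feq (Tvar ord0 (code p)) (Tvar ord0 (code q)) in
  if dec p q then e else Fnot e.

Definition arr2 n (dec : nat * nat -> nat * nat -> bool) (M N : seq (nat * nat)) : formula n false :=
  foldr (fun p acc => foldr (fun q acc2 => Fand (lit n dec p q) acc2) acc M) (Ftrue _ _) N.
Definition arr n dec N := arr2 n dec N N.

Lemma qfree_foldr n b (X : Type) (g : X -> formula n b) base l :
  qfree base -> (forall x, qfree (g x)) ->
  qfree (foldr (fun x acc => Fand (g x) acc) base l).
Proof. by move=> Hb Hg; elim: l => //= x l ->; rewrite Hg. Qed.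

Lemma qfree_arr n dec N : qfree (arr n dec N).
Proof.
rewrite /arr; move: {1}N => M; elim: N => //= p l IH.
apply: qfree_foldr => // q; rewrite /lit; by case: ifP.
Qed.

Lemma holds_foldr n b (D : 'I_n.+1 -> Type) s v (X : eqType) (g : X -> formula n b) base l :
  holds (D:=D) s v (foldr (fun x acc => Fand (g x) acc) base l) <->
  (forall x, x \in l -> holds s v (g x)) /\ holds s v base.
Proof.
elim: l => [|x l IH] /=; first by split => [H|[]] //.
rewrite IH; split.
  by move=> [Hx [Hl Hb]]; split => // y; rewrite inE => /orP [/eqP ->|/Hl].
by move=> [H Hb]; split; [apply: H; rewrite inE eqxx|split => // y Hy; apply: H; rewrite inE Hy orbT].
Qed.

Lemma holds_arr n (D : 'I_n.+1 -> Type) s v dec N :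
  holds (D:=D) s v (arr n dec N) <-> forall p q, p \in N -> q \in N -> holds s v (lit n dec p q).
Proof.
rewrite /arr /arr2; move: {1 4}N => M.
elim: N => [|p l IH] /=; first by split => // _ p q.
rewrite holds_foldr IH; split.
  move=> [H1 H2] p' q Hp Hq; move: Hp; rewrite inE => /orP [/eqP ->|Hp].
    exact: H1.
  exact: H2.
move=> H; split; first by move=> q Hq; apply: H; rewrite ?inE ?eqxx.
by move=> p' q Hp Hq; apply: H; rewrite ?inE ?Hp ?orbT.
Qed.

Lemma nf_in n σ (t : term n true σ) : nf t \in tnfs t.
Proof. by case: t => * /=; rewrite inE eqxx. Qed.

Lemma core n (Ax : formula n false -> Prop) (Ax_closed : forall φ, Ax φ -> closed_form φ)
  (A : interp n true) (φ : formula n true) :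
  model (ext_axioms Ax) A -> qfree φ -> sat A φ ->
  exists χ : formula n false, qfree χ /\
   (exists A0 : interp n false, model Ax A0 /\ sat A0 χ /\ forall σ, dom A0 σ = dom A σ) /\
   (forall B : interp n false, model Ax B -> sat B χ ->
      exists B' : interp n true, model (ext_axioms Ax) B' /\ sat B' φ /\
        forall σ, dom B' σ = dom B σ).
Proof.
move=> MA qφ Hφ.
pose s1 := @sI _ _ A isT.
pose vA := fun σ j => iter (uncode j).2 (sS s1 σ) (Defs.val A σ (uncode j).1).
pose a := fun p => vA ord0 (code p).
pose N := fnfs φ.
pose dec := fun p q => if excluded_middle_informative (a p = a q) then true else false.
have Hdec : forall p q, dec p q = true <-> a p = a q.
  move=> p q; rewrite /dec; case: excluded_middle_informative => //.
have Hpsi : forall d, s1 (s1 d) = d \/ s1 (s1 d) = s1 d.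
  by apply/(psi_sem (@sI _ _ A) (Defs.val A)); exact: (MA _ (or_intror erefl)).
have HaS : forall p, a (p.1, p.2.+1) = s1 (a p).
  by move=> p; rewrite /a /vA !codeK /= sS0.
exists (Fand (trf φ) (arr n dec N)).
split; first by rewrite /= qfree_trf qfree_arr.
split.
  exists (Interp (dom_ne A) (fun (_ : false) (x : dom A ord0) => x) vA).
  split; [|split]; last by [].
    move=> ψ Hψ; rewrite /sat /=.
    have := MA (flift ψ) (or_introl (ex_intro _ ψ (conj Hψ erefl))).
    rewrite /sat (holds_lift _ (fun _ x => x)).
    by move/(closed_holds _ _ _ (Ax_closed _ Hψ)).
  split.
    apply/(holds_tr (N:=N)) => //.
    by move=> σ t _ /=; rewrite /vA codeK teval_nf.
    exact: Hφ.
  apply/holds_arr => p q _ _; rewrite /lit; case E: (dec p q) => /=.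
    by apply/Hdec.
  by move=> H; move: E; have /Hdec -> : a p = a q by [].
move=> B MB [HB1 HB2].
pose vB := Defs.val B.
pose b := fun p => vB ord0 (code p).
have Hab : forall p q, p \in N -> q \in N -> (a p = a q <-> b p = b q).
  move=> p q Hp Hq; move/holds_arr: HB2 => /(_ p q Hp Hq); rewrite /lit.
  case E: (dec p q) => /=.
    by move=> H; split => // _; apply/Hdec.
  move=> H; split => H'; last by exfalso; apply: H.
  by move: E; have /Hdec -> : a p = a q by [].
pose succ := fun p : nat * nat => (p.1, p.2.+1).
pose N' := fun p => (p \in N) && (succ p \in N).
pose sB := fun x => match excluded_middle_informative (exists p, N' p /\ x = b p) with
  | left H => b (succ (proj1_sig (constructive_indefinite_description _ H)))
  | right _ => x end.
have sB_out : forall x, ~ (exists p, N' p /\ x = b p) -> sB x = x.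
  by move=> x Hn; rewrite /sB; case: excluded_middle_informative.
have sB_b : forall p, N' p -> sB (b p) = b (succ p).
  move=> p Np; rewrite /sB; case: excluded_middle_informative => [H|H]; last first.
    by exfalso; apply: H; exists p.
  case: constructive_indefinite_description => q [Nq Eq] /=.
  move: Np Nq => /andP [p1 p2] /andP [q1 q2].
  apply/Hab => //; rewrite /succ !HaS.
  by have /Hab -> : b p = b q by [].
exists (Interp (dom_ne B) (fun _ => sB) (fun σ k => vB σ (code (k, 0)))).
split; [|split]; last by [].
  move=> ψ [[ψ0 [H0 ->]] | ->].
    rewrite /sat /= (holds_lift _ (@sI _ _ B)).
    apply/(closed_holds _ _ _ (Ax_closed _ H0)); exact: MB.
  apply/psi_sem => d /=.
  case: (excluded_middle_informative (exists p, N' p /\ d = b p)) => [[p [Np ->]]|Hn];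
    last by rewrite !(sB_out _ Hn); left.
  rewrite sB_b //.
  case: (excluded_middle_informative (exists q, N' q /\ b (succ p) = b q)) => [[q [Nq Eq]]|Hn];
    last by rewrite sB_out //; right.
  rewrite Eq sB_b //.
  move: Np Nq => /andP [p1 p2] /andP [q1 q2].
  have Eaq : a q = s1 (a p) by rewrite -HaS; apply/Hab.
  case: (Hpsi (a p)) => Ha; [left|right]; apply/Hab => //; rewrite /succ HaS Eaq //.
apply/(holds_tr (s2 := @sI _ _ B) (v2 := vB) (N := N)) => //.
move=> σ t; elim: t => [//|h t IH] sub /=.
rewrite IH; last by move=> x Hx; apply: sub; rewrite /= inE Hx orbT.
have Hn1 : nf t \in N by apply: sub; rewrite /= inE nf_in ?orbT.
have Hn2 : succ (nf t) \in N by apply: sub; rewrite /= inE eqxx.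
by have := sB_b (nf t); rewrite /N' Hn1 Hn2 => /(_ isT).
Qed.

Lemma expand n (Ax : formula n false -> Prop) (A : interp n false) :
  model Ax A -> model (ext_axioms Ax)
     (Interp (dom_ne A) (fun (_ : true) (x : dom A ord0) => x) (Defs.val A)).
Proof.
move=> MA ψ [[ψ0 [H0 ->]]|->].
  rewrite /sat /= (holds_lift _ (@sI _ _ A)); exact: MA.
by apply/psi_sem => d; left.
Qed.

Lemma reduct n (Ax : formula n false -> Prop) (B : interp n true) φ :
  model (ext_axioms Ax) B -> sat B (flift φ) ->
  model Ax (Interp (dom_ne B) (fun (_ : false) (x : dom B ord0) => x) (Defs.val B)) /\
  sat (Interp (dom_ne B) (fun (_ : false) (x : dom B ord0) => x) (Defs.val B)) φ.
Proof.
move=> MB HB; split.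
  move=> ψ Hψ; rewrite /sat /= -(holds_lift (@sI _ _ B)).
  exact: (MB _ (or_introl (ex_intro _ ψ (conj Hψ erefl)))).
by rewrite /sat /= -(holds_lift (@sI _ _ B)).
Qed.

Theorem theorem10 (n : nat) (Ax : formula n false -> Prop)
  (Ax_closed : forall φ, Ax φ -> closed_form φ) :
  (FMP Ax <-> FMP (ext_axioms Ax)) /\
  (stably_finite Ax <-> stably_finite (ext_axioms Ax)).
Proof.
split; split.
- move=> F φ qφ [A [MA HA]].
  have [χ [qχ [[A0 [MA0 [HA0 _]]] HB]]] := core Ax_closed MA qφ HA.
  have [B [MB [HBχ Fin]]] := F χ qχ (ex_intro _ A0 (conj MA0 HA0)).
  have [B' [MB' [HB' E]]] := HB B MB HBχ.
  by exists B'; split; [|split] => // σ; rewrite E; exact: Fin.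
- move=> F φ qφ [A [MA HA]].
  have HA' : sat (Interp (dom_ne A) (fun (_ : true) (x : dom A ord0) => x) (Defs.val A)) (flift φ).
    by rewrite /sat /= (holds_lift _ (@sI _ _ A)).
  have [B' [MB' [HB' Fin]]] := F (flift φ) (ltac:(by rewrite qfree_lift))
     (ex_intro _ _ (conj (expand MA) HA')).
  have [MB HB] := reduct MB' HB'.
  by eexists; split; [exact: MB|split; [exact: HB|exact: Fin]].
- move=> F φ qφ A MA HA.
  have [χ [qχ [[A0 [MA0 [HA0 E0]]] HB]]] := core Ax_closed MA qφ HA.
  have [B [MB [HBχ Fin]]] := F χ qχ A0 MA0 HA0.
  have [B' [MB' [HB' E]]] := HB B MB HBχ.
  exists B'; split; [|split] => // σ; rewrite E; have [f1 f2] := Fin σ.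
  by split => //; rewrite -E0.
- move=> F φ qφ A MA HA.
  have HA' : sat (Interp (dom_ne A) (fun (_ : true) (x : dom A ord0) => x) (Defs.val A)) (flift φ).
    by rewrite /sat /= (holds_lift _ (@sI _ _ A)).
  have [B' [MB' [HB' Fin]]] := F (flift φ) (ltac:(by rewrite qfree_lift)) _ (expand MA) HA'.
  have [MB HB] := reduct MB' HB'.
  by eexists; split; [exact: MB|split; [exact: HB|exact: Fin]].
Qed.
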